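(* Let $\varphi\colon G\to G$ be an endomorphism of a torsion abelian group $G$ and $H\leq G$ a subgroup with $\varphi H\subseteq H$. If the restriction $\varphi|_H\colon H\to H$ and the induced endomorphism $\widetilde\varphi\colon G/H\to G/H$, $\widetilde\varphi(g+H)=\varphi g+H$, are positively expansive, then $\varphi$ is positively expansive. Analogously, if $\varphi$ is an automorphism such that $\varphi|_H$ is an automorphism of $H$, and $\varphi|_H$ and the induced automorphism $\widetilde\varphi$ of $G/H$ are expansive, then $\varphi$ is expansive.
   Context: $\mathbb N=\{0,1,2,\dots\}$. An endomorphism $\varphi$ of an abelian group $G$ is positively expansive if there is a finite subgroup $S\leq G$ such that for every finite subgroup $F\leq G$ there is $n\in\mathbb N$ with $F\subseteq\sum_{k=0}^n\varphi^kS$. An automorphism $\varphi$ is expansive if there is a finite subgroup $S\leq G$ such that for every finite subgroup $F\leq G$ there is $n\in\mathbb N$ with $F\subseteq\sum_{|k|\leq n}\varphi^kS$. *)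

(* Defs.v *)
From HB Require Import structures.
From mathcomp Require Import all_boot all_order all_algebra.
Set Implicit Arguments. Unset Strict Implicit. Unset Printing Implicit Defensive.
Import Order.TTheory GRing.Theory.
Local Open Scope ring_scope.

Definition is_subgroup (G : zmodType) (S : G -> Prop) : Prop :=
  S 0 /\ (forall x y, S x -> S y -> S (x - y)).

Definition is_finite_set (G : zmodType) (S : G -> Prop) : Prop :=
  exists s : seq G, forall x, S x -> x \in s.

Definition finite_subgroup (G : zmodType) (S : G -> Prop) : Prop :=
  is_subgroup S /\ is_finite_set S.

Definition subset_of (G : zmodType) (A B : G -> Prop) : Prop :=
  forall x, A x -> B x.

Definition pos_orbit_sum (G : zmodType) (f : G -> G) (S : G -> Prop) (n : nat)
  : G -> Prop :=
  fun x => exists s : nat -> G, (forall k, S (s k)) /\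
           x = \sum_(k < n.+1) iter k f (s k).

(* sum_{|k|<=n} f^k S, where f^(-k) = finv^k for the inverse finv of f *)
Definition orbit_sum (G : zmodType) (f finv : G -> G) (S : G -> Prop) (n : nat)
  : G -> Prop :=
  fun x => exists s t : nat -> G, (forall k, S (s k)) /\ (forall k, S (t k)) /\
           x = \sum_(k < n.+1) iter k f (s k) + \sum_(k < n) iter k.+1 finv (t k).

(* Positive expansivity of the endomorphism f restricted to the (f-invariant)
   subgroup H of G: finite subgroups of H are exactly the finite subgroups of G
   contained in H. *)
Definition pos_expansive_on (G : zmodType) (H : G -> Prop) (f : G -> G) : Prop :=
  exists S, finite_subgroup S /\ subset_of S H /\
    forall F, finite_subgroup F -> subset_of F H ->
      exists n : nat, subset_of F (pos_orbit_sum f S n).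

Definition pos_expansive (G : zmodType) (f : G -> G) : Prop :=
  pos_expansive_on (fun _ => True) f.

Definition expansive_on (G : zmodType) (H : G -> Prop) (f finv : G -> G) : Prop :=
  exists S, finite_subgroup S /\ subset_of S H /\
    forall F, finite_subgroup F -> subset_of F H ->
      exists n : nat, subset_of F (orbit_sum f finv S n).

Definition expansive (G : zmodType) (f finv : G -> G) : Prop :=
  expansive_on (fun _ => True) f finv.

Definition torsion (G : zmodType) : Prop :=
  forall x : G, exists n : nat, (0 < n)%N /\ x *+ n = 0.

(* pi : G -> Q presents Q as the quotient G/H: pi is a surjective additive map
   whose kernel is exactly H. *)
Definition is_quotient_map (G Q : zmodType) (H : G -> Prop) (pi : G -> Q) : Prop :=
  (forall q : Q, exists g, pi g = q) /\ (forall g, pi g = 0 <-> H g).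

(* Main.v *)
Require Import Defs.
From Stdlib Require Import Classical ClassicalEpsilon.
From mathcomp Require Import all_boot all_order all_algebra.
Import GRing.Theory.
Local Open Scope ring_scope.
Set Implicit Arguments. Unset Strict Implicit.

Fixpoint spanP {G : zmodType} (l : seq G) : G -> Prop :=
  match l with
  | [::] => fun x => x = 0
  | a :: l' => fun x => exists j : nat, exists y, spanP l' y /\ x = a *+ j + y
  end.

Lemma sg_add (G : zmodType) (H : G -> Prop) : is_subgroup H ->
  forall x y, H x -> H y -> H (x + y).
Proof.
move=> [H0 HB] x y Hx Hy. have := HB x (0 - y) Hx (HB _ _ H0 Hy).
by rewrite sub0r opprK.
Qed.

Lemma sg_muln (G : zmodType) (H : G -> Prop) : is_subgroup H ->
  forall x j, H x -> H (x *+ j).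
Proof.
move=> sH x j Hx; elim: j => [|j IH]; first by rewrite mulr0n; exact (proj1 sH).
by rewrite mulrS; apply: sg_add.
Qed.

Lemma span_sub {G : zmodType} (tG : torsion G) (l : seq G) : is_subgroup (spanP l).
Proof.
elim: l => [|a l [IH0 IHB]] /=.
  split; first by []. by move=> x y -> ->; rewrite subr0.
have [n [n0 an]] := tG a.
split. by exists 0%N, 0; rewrite mulr0n add0r.
move=> x y [j [u [Hu ->]]] [j' [v [Hv ->]]].
exists (j + (n.-1 * j'))%N, (u - v); split; first exact: IHB.
have Na : a *+ n.-1 = - a.
  by apply: (addIr a); rewrite addNr -mulrSr prednK.
by rewrite mulrnDr mulrnA Na mulNrn opprD addrACA.
Qed.

Lemma span_fin {G : zmodType} (tG : torsion G) (l : seq G) : is_finite_set (spanP l).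
Proof.
elim: l => [|a l [L HL]] /=.
  by exists [:: 0] => x ->; rewrite inE.
have [n [n0 an]] := tG a.
exists [seq a *+ i + y | i <- iota 0 n, y <- L] => x [j [y [Hy ->]]].
have -> : a *+ j = a *+ (j %% n).
  by rewrite {1}(divn_eq j n) mulrnDr mulnC mulrnA an mul0rn add0r.
apply: allpairs_f; last exact: HL.
by rewrite mem_iota /= add0n ltn_mod n0.
Qed.

Lemma span_mem {G : zmodType} (tG : torsion G) (l : seq G) x : x \in l -> spanP l x.
Proof.
elim: l => [|a l IH] //= Hx. rewrite inE in Hx; case/orP: Hx => [/eqP ->|Hx].
  exists 1%N, 0; split; [exact: (proj1 (span_sub tG l)) | by rewrite addr0].
exists 0%N, x; split; first exact: IH. by rewrite mulr0n add0r.
Qed.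

Lemma span_in (G : zmodType) (H : G -> Prop) (l : seq G) : is_subgroup H ->
  (forall x, x \in l -> H x) -> subset_of (spanP l) H.
Proof.
move=> sH; elim: l => [|a l IH] Hl x /=.
  by move=> ->; exact (proj1 sH).
move=> [j [y [Hy ->]]]. apply: sg_add => //.
  apply: sg_muln => //; apply: Hl; exact: mem_head.
apply: IH => //. by move=> z Hz; apply Hl; rewrite inE Hz orbT.
Qed.

Lemma choose_list (G : zmodType) (D Qz : G -> Prop) (R : G -> G -> Prop) (l : seq G) :
  (forall x, D x -> exists z, Qz z /\ R x z) ->
  exists l' : seq G, (forall z, z \in l' -> Qz z) /\
     forall x, D x -> x \in l -> exists z, z \in l' /\ R x z.
Proof.
move=> hD; elim: l => [|a l [l' [H1 H2]]].
  exists [::]; split; first by move=> z; rewrite in_nil.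
  by move=> x _; rewrite in_nil.
case: (classic (D a)) => Da.
  have [z [Qz' Rz]] := hD a Da. exists (z :: l'); split.
    move=> w; rewrite inE => /orP [/eqP -> //| ]; exact: H1.
  move=> x Dx; rewrite inE => /orP [/eqP -> | xl].
    by exists z; rewrite mem_head.
  have [w [wl Rw]] := H2 x Dx xl; exists w; by rewrite inE wl orbT.
exists l'; split => // x Dx; rewrite inE => /orP [/eqP Ex | xl].
  by rewrite Ex in Dx.
exact: H2.
Qed.

Lemma lift_list (G Q : zmodType) (pi : G -> Q) :
  (forall q, exists g, pi g = q) -> forall lQ : seq Q,
  exists lL : seq G, forall q, q \in lQ -> exists g, g \in lL /\ pi g = q.
Proof.
move=> surj; elim => [|a l [lL HL]].
  by exists [::] => q; rewrite in_nil.
have [g Hg] := surj a. exists (g :: lL) => q; rewrite inE => /orP [/eqP -> | ql].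
  by exists g; rewrite mem_head.
have [h [hl Hh]] := HL q ql; exists h; by rewrite inE hl orbT.
Qed.

Definition Sig (G : zmodType) (fs : nat -> G -> G) (S : G -> Prop) (N : nat) : G -> Prop :=
  fun x => exists s : nat -> G, (forall k, S (s k)) /\ x = \sum_(k < N) fs k (s k).

Lemma Sig_monoS (G : zmodType) fs (S S' : G -> Prop) N x :
  subset_of S S' -> Sig fs S N x -> Sig fs S' N x.
Proof. by move=> SS [s [Hs ->]]; exists s; split => // k; apply: SS. Qed.

Lemma Sig_monoN (G : zmodType) (fs : nat -> G -> G) S N M x :
  (forall k, fs k 0 = 0) -> S 0 -> (N <= M)%N -> Sig fs S N x -> Sig fs S M x.
Proof.
move=> f0 S0 NM [s [Hs ->]].
exists (fun k => if (k < N)%N then s k else 0); split.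
  by move=> k; case: ifP.
rewrite (big_ord_widen _ (fun k => fs k (s k)) NM) big_mkcond /=.
by apply: eq_bigr => i _; case: ifP => _ //; rewrite f0.
Qed.

Lemma Sig_add (G : zmodType) (fs : nat -> G -> G) S N x y :
  (forall k a b, fs k (a + b) = fs k a + fs k b) ->
  (forall a b, S a -> S b -> S (a + b)) ->
  Sig fs S N x -> Sig fs S N y -> Sig fs S N (x + y).
Proof.
move=> fD SD [s [Hs ->]] [t [Ht ->]].
exists (fun k => s k + t k); split; first by move=> k; apply: SD.
by rewrite -big_split /=; apply: eq_bigr => i _; rewrite fD.
Qed.

Lemma Sig_lift (G Q : zmodType) (pi : {additive G -> Q}) (fs : nat -> G -> G)
  (fsQ : nat -> Q -> Q) (SQ : Q -> Prop) (lL : seq G) N q :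
  (forall k g, pi (fs k g) = fsQ k (pi g)) ->
  (forall q', SQ q' -> exists g, g \in lL /\ pi g = q') ->
  Sig fsQ SQ N q -> exists y, Sig fs (fun g => g \in lL) N y /\ pi y = q.
Proof.
move=> comm hl [s [Hs ->]].
pose t k := proj1_sig (constructive_indefinite_description _ (hl _ (Hs k))).
have Ht k : t k \in lL /\ pi (t k) = s k :=
  proj2_sig (constructive_indefinite_description _ (hl _ (Hs k))).
exists (\sum_(k < N) fs k (t k)); split.
  by exists t; split => // k; exact (proj1 (Ht k)).
by rewrite raddf_sum; apply: eq_bigr => i _; rewrite comm (proj2 (Ht i)).
Qed.

Lemma iterD (G : zmodType) (f : G -> G) : (forall a b, f (a + b) = f a + f b) ->
  forall k a b, iter k f (a + b) = iter k f a + iter k f b.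
Proof. by move=> fD; elim => //= k IH a b; rewrite IH fD. Qed.

Lemma iter0 (G : zmodType) (f : G -> G) : f 0 = 0 -> forall k, iter k f 0 = 0.
Proof. by move=> f0; elim => //= k ->. Qed.

Lemma iter_comm (G Q : zmodType) (pi : G -> Q) f fQ :
  (forall g, fQ (pi g) = pi (f g)) -> forall k g, pi (iter k f g) = iter k fQ (pi g).
Proof. by move=> hc; elim => //= k IH g; rewrite -hc IH. Qed.

Lemma main_abstract (G Q : zmodType) (pi : {additive G -> Q}) (H : G -> Prop)
 (O : (G -> Prop) -> nat -> G -> Prop) (OQ : (Q -> Prop) -> nat -> Q -> Prop) :
 torsion G -> is_subgroup H -> is_quotient_map H pi ->
 (forall S S' n x, subset_of S S' -> O S n x -> O S' n x) ->
 (forall S n m x, is_subgroup S -> (n <= m)%N -> O S n x -> O S m x) ->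
 (forall S n x y, is_subgroup S -> O S n x -> O S n y -> O S n (x + y)) ->
 (forall (SQ : Q -> Prop) (lL : seq G) n q,
    (forall q', SQ q' -> exists g, g \in lL /\ pi g = q') ->
    OQ SQ n q -> exists y, O (fun g => g \in lL) n y /\ pi y = q) ->
 (exists S, finite_subgroup S /\ subset_of S H /\ forall F, finite_subgroup F ->
      subset_of F H -> exists n, subset_of F (O S n)) ->
 (exists S, finite_subgroup S /\ subset_of S (fun _ => True) /\
   forall F, finite_subgroup F -> subset_of F (fun _ => True) ->
      exists n, subset_of F (OQ S n)) ->
 exists S, finite_subgroup S /\ subset_of S (fun _ => True) /\
   forall F, finite_subgroup F -> subset_of F (fun _ => True) ->
      exists n, subset_of F (O S n).
Proof.
move=> tG sH [piS piK] Omono Omon Oadd Olift [SH [[_ [lH HlH]] [SHH hH]]]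
  [SQ [[_ [lQ HlQ]] [_ hQ]]].
have [lL HlL] := lift_list piS lQ.
pose S := spanP (lH ++ lL).
have sS : is_subgroup S := span_sub tG _.
exists S; split; first by split => //; exact: span_fin.
split => // F [sF [lF HlF]] _.
pose FQ := fun q => exists x, F x /\ q = pi x.
have fFQ : finite_subgroup FQ.
  split. split.
      exists 0; split; [exact (proj1 sF) | by rewrite raddf0].
    move=> _ _ [x [Fx ->]] [y [Fy ->]].
    exists (x - y); split; [exact: (proj2 sF) | by rewrite raddfB].
  exists (map pi lF) => _ [x [Fx ->]]. apply: map_f; exact: HlF.
have [n hn] := hQ FQ fFQ (fun _ _ => I).
have hy : forall x, F x -> exists z, H z /\
    exists y, O (fun g => g \in lL) n y /\ z = x - y.
  move=> x Fx.
  have [y [Oy piy]] := Olift SQ lL n (pi x) (fun q' Sq => HlL q' (HlQ q' Sq))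
      (hn (pi x) (ex_intro _ x (conj Fx erefl))).
  exists (x - y); split; last by exists y.
  by apply/piK; rewrite raddfB piy subrr.
have [l' [Hl'1 Hl'2]] := choose_list lF hy.
have [m hm] := hH (spanP l') (conj (span_sub tG l') (span_fin tG l'))
   (span_in sH Hl'1).
exists (maxn n m) => x Fx.
have [z [zl [y [Oy Ez]]]] := Hl'2 x Fx (HlF x Fx).
have -> : x = z + y by rewrite Ez subrK.
apply: Oadd => //.
  apply: (Omon _ m) => //; first exact: leq_maxr.
  apply: (Omono SH) => [w Sw|].
    by apply: (span_mem tG); rewrite mem_cat HlH.
  exact: hm (span_mem tG zl).
apply: (Omon _ n) => //; first exact: leq_maxl.
apply: (Omono (fun g => g \in lL)) => // w wl.
by apply: (span_mem tG); rewrite mem_cat wl orbT.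
Qed.

Theorem proposition2p9 :
  (forall (G : zmodType) (phi : {additive G -> G}) (H : G -> Prop)
          (Q : zmodType) (pi : {additive G -> Q}) (phit : Q -> Q),
      torsion G -> is_subgroup H ->
      (forall g, H g -> H (phi g)) ->
      is_quotient_map H pi ->
      (forall g, phit (pi g) = pi (phi g)) ->
      pos_expansive_on H phi -> pos_expansive phit ->
      pos_expansive phi)
  /\
  (forall (G : zmodType) (phi : {additive G -> G}) (phiinv : G -> G)
          (H : G -> Prop)
          (Q : zmodType) (pi : {additive G -> Q}) (phit phitinv : Q -> Q),
      torsion G -> is_subgroup H ->
      cancel phi phiinv -> cancel phiinv phi ->
      (forall g, H g -> H (phi g)) ->
      (forall g, H g -> H (phiinv g)) ->
      is_quotient_map H pi ->
      (forall g, phit (pi g) = pi (phi g)) ->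
      cancel phit phitinv -> cancel phitinv phit ->
      expansive_on H phi phiinv -> expansive phit phitinv ->
      expansive phi phiinv).
Proof.
split.
  move=> G phi H Q pi phit tG sH _ qm comm hH hQ.
  have fD := iterD (raddfD phi).
  have f0 := iter0 (raddf0 phi).
  apply: (@main_abstract G Q pi H (fun S n => pos_orbit_sum phi S n)
            (fun S n => pos_orbit_sum phit S n) tG sH qm) => //.
  - move=> S S' n x SS Ox; exact: (@Sig_monoS G (fun k => iter k phi) S S').
  - move=> S n m x sS nm Ox.
    exact: (@Sig_monoN G (fun k => iter k phi) S n.+1 m.+1 x (fun k => f0 k) (proj1 sS)).
  - move=> S n x y sS Ox Oy.
    exact: (@Sig_add G (fun k => iter k phi) S n.+1 x y (fun k => fD k) (sg_add sS)).
  - move=> SQ lL n q hl Oq.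
    apply: (@Sig_lift G Q pi (fun k => iter k phi) (fun k => iter k phit) SQ lL n.+1 q _ hl Oq).
    by move=> k g; apply: iter_comm.
move=> G phi phiinv H Q pi phit phitinv tG sH c1 c2 _ _ qm comm ct1 ct2 hH hQ.
have invD : forall a b, phiinv (a + b) = phiinv a + phiinv b.
  by move=> a b; rewrite -{1}(c2 a) -{1}(c2 b) -raddfD c1.
have inv0 : phiinv 0 = 0 by rewrite -{1}(raddf0 phi) c1.
have commi : forall g, phitinv (pi g) = pi (phiinv g).
  by move=> g; rewrite -{1}(c2 g) -comm ct1.
have fD := iterD (raddfD phi).
have f0 := iter0 (raddf0 phi).
have gD := iterD invD.
have g0 := iter0 inv0.
have OE : forall (K : zmodType) (f finv : K -> K) S n x,
    orbit_sum f finv S n x <-> exists a b, Sig (fun k => iter k f) S n.+1 a /\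
      Sig (fun k => iter k.+1 finv) S n b /\ x = a + b.
  move=> K f finv S n x; split.
    move=> [s [t [Hs [Ht ->]]]].
    by do 2 eexists; split; [exists s | split; [exists t|]].
  by move=> [a [b [[s [Hs ->]] [[t [Ht ->]] ->]]]]; exists s, t.
apply: (@main_abstract G Q pi H (fun S n => orbit_sum phi phiinv S n)
          (fun S n => orbit_sum phit phitinv S n) tG sH qm) => //.
- move=> S S' n x SS /OE [a [b [Oa [Ob ->]]]]; apply/OE.
  exists a, b; split; first exact: (@Sig_monoS G _ S S').
  by split => //; exact: (@Sig_monoS G _ S S').
- move=> S n m x sS nm /OE [a [b [Oa [Ob ->]]]]; apply/OE.
  exists a, b; split.
    exact: (@Sig_monoN G (fun k => iter k phi) S n.+1 m.+1 a (fun k => f0 k) (proj1 sS)).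
  split => //.
  exact: (@Sig_monoN G (fun k => iter k.+1 phiinv) S n m b (fun k => g0 k.+1) (proj1 sS)).
- move=> S n x y sS /OE [a [b [Oa [Ob ->]]]] /OE [a' [b' [Oa' [Ob' ->]]]].
  apply/OE; exists (a + a'), (b + b'); split.
    exact: (@Sig_add G (fun k => iter k phi) S n.+1 a a' (fun k => fD k) (sg_add sS)).
  split; last by rewrite addrACA.
  exact: (@Sig_add G (fun k => iter k.+1 phiinv) S n b b' (fun k => gD k.+1) (sg_add sS)).
- move=> SQ lL n q hl /OE [a [b [Oa [Ob ->]]]].
  have [y1 [Oy1 py1]] := @Sig_lift G Q pi (fun k => iter k phi) (fun k => iter k phit)
     SQ lL n.+1 a (fun k g => iter_comm comm k g) hl Oa.
  have [y2 [Oy2 py2]] := @Sig_lift G Q pi (fun k => iter k.+1 phiinv)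
     (fun k => iter k.+1 phitinv)
     SQ lL n b (fun k g => iter_comm commi k.+1 g) hl Ob.
  exists (y1 + y2); split; last by rewrite raddfD py1 py2.
  by apply/OE; exists y1, y2.
Qed.
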